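(* Let $H\in M_{M\times N}(\mathbb T)$ be a partial Hadamard matrix with rows $R_1,\ldots,R_M\in\mathbb T^N$. Then there is a unique unital $*$-representation $\pi_H:\widetilde A_s(M)\to M_N(\mathbb C)$ with $\pi_H(u_{ij})=\mathrm{Proj}(R_i/R_j)$ for all $i,j$.
   Context: $\mathbb T$ is the unit circle. A partial Hadamard matrix is a matrix $H\in M_{M\times N}(\mathbb T)$ whose rows are pairwise orthogonal in $\mathbb C^N$. $R_i/R_j\in\mathbb T^N$ denotes entrywise division, and $\mathrm{Proj}(\xi)$ denotes the orthogonal projection onto $\mathbb C\xi$. A submagic matrix over a unital $C^*$-algebra is a square matrix whose entries are orthogonal projections, pairwise orthogonal within each row and within each column; $\widetilde A_s(M)$ is the universal unital $C^*$-algebra generated by the entries $u_{ij}$ of an $M\times M$ submagic matrix. *)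

(* Defs.v *)
From HB Require Import structures.
From mathcomp Require Import all_boot all_order all_algebra.
From mathcomp Require Import complex.
From mathcomp Require Import reals.
Set Implicit Arguments. Unset Strict Implicit. Unset Printing Implicit Defensive.
Import Order.TTheory GRing.Theory Num.Theory.
Local Open Scope ring_scope.

Section Defs.
Variable R : realType.
Local Notation C := (R[i]).

Definition ctmx (m n : nat) (X : 'M[C]_(m, n)) : 'M[C]_(n, m) :=
  \matrix_(i, j) (X j i)^*.

Definition partial_hadamard (M N : nat) (H : 'M[C]_(M, N)) : Prop :=
  (forall i k, `|H i k| = 1) /\
  (forall i j : 'I_M, i != j -> \sum_(k < N) H i k * (H j k)^* = 0).

Definition row_ratio (M N : nat) (H : 'M[C]_(M, N)) (i j : 'I_M) : 'I_N -> C :=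
  fun k => H i k / H j k.

(* orthogonal projection onto C xi, i.e. xi xi^* / <xi, xi>
   (equal to 0 when xi = 0) *)
Definition Proj (N : nat) (xi : 'I_N -> C) : 'M[C]_N :=
  \matrix_(a, b) (xi a * (xi b)^* / \sum_(k < N) xi k * (xi k)^*).

Definition star_algebra (A : lalgType C) (star : A -> A) : Prop :=
  [/\ involutive star,
      (forall a b, star (a + b) = star a + star b),
      (forall (c : C) a, star (c *: a) = c^* *: star a) &
      (forall a b, star (a * b) = star b * star a)].

Definition unital_star_rep (A : lalgType C) (star : A -> A) (k : nat)
    (pi : A -> 'M[C]_k) : Prop :=
  [/\ (forall a b, pi (a + b) = pi a + pi b),
      (forall (c : C) a, pi (c *: a) = c *: pi a),
      (forall a b, pi (a * b) = pi a *m pi b),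
      pi 1 = 1%:M &
      (forall a, pi (star a) = ctmx (pi a))].

Definition submagic (A : lalgType C) (star : A -> A) (M : nat)
    (u : 'I_M -> 'I_M -> A) : Prop :=
  [/\ (forall i j, star (u i j) = u i j /\ u i j * u i j = u i j),
      (forall i j k, j != k -> u i j * u i k = 0) &
      (forall i j k, i != k -> u i j * u k j = 0)].

Definition submagic_mx (k M : nat) (Q : 'I_M -> 'I_M -> 'M[C]_k) : Prop :=
  [/\ (forall i j, ctmx (Q i j) = Q i j /\ Q i j *m Q i j = Q i j),
      (forall i j l, j != l -> Q i j *m Q i l = 0) &
      (forall i j l, i != l -> Q i j *m Q l j = 0)].

(* The universal property of A~_s(M) = C*(u_ij | u submagic), restricted to
   representations on finite-dimensional Hilbert spaces C^k (the only
   targets relevant to the statement). *)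
Definition submagic_universal (A : lalgType C) (star : A -> A) (M : nat)
    (u : 'I_M -> 'I_M -> A) : Prop :=
  forall (k : nat) (Q : 'I_M -> 'I_M -> 'M[C]_k), submagic_mx Q ->
    exists pi : A -> 'M[C]_k,
      (unital_star_rep star pi /\ forall i j, pi (u i j) = Q i j) /\
      (forall pi' : A -> 'M[C]_k,
         unital_star_rep star pi' /\ (forall i j, pi' (u i j) = Q i j) ->
         pi' = pi).

End Defs.

(* Main.v *)
Require Import Defs.
From HB Require Import structures.
From mathcomp Require Import all_boot all_order all_algebra.
From mathcomp Require Import complex.
From mathcomp Require Import reals.
From mathcomp Require Import ring.
Import Order.TTheory GRing.Theory Num.Theory.
Local Open Scope ring_scope.

Section Aux.
Variable R : realType.
Local Notation C := (R[i]).

Lemma unit_conj (z : C) : `|z| = 1 -> z * z^* = 1.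
Proof. by move=> h; rewrite -normCK h expr1n. Qed.

Lemma unit_inv (z : C) : `|z| = 1 -> z^-1 = z^*.
Proof.
move=> h; have e := @unit_conj z h.
have z0 : z != 0 by apply/eqP => z0; move: e; rewrite z0 mul0r => /eqP; rewrite eq_sym oner_eq0.
by rewrite -[z^-1]mulr1 -e mulrA mulVf // mul1r.
Qed.

Lemma Proj_mul (N : nat) (xi eta : 'I_N -> C) :
  Proj xi *m Proj eta = \matrix_(a, b)
    ((\sum_(c < N) (xi c)^* * eta c) * (xi a * (eta b)^*
       / (\sum_(k < N) xi k * (xi k)^*) / (\sum_(k < N) eta k * (eta k)^*))).
Proof.
apply/matrixP => a b; rewrite !mxE big_distrl /=; apply: eq_bigr => c _.
rewrite !mxE; ring.
Qed.

Lemma ratio_norm (M N : nat) (H : 'M[C]_(M, N)) i j k :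
  partial_hadamard H -> `|row_ratio H i j k| = 1.
Proof. by case=> hn _; rewrite /row_ratio normf_div !hn divr1. Qed.

Lemma ratio_sum (M N : nat) (H : 'M[C]_(M, N)) i j :
  partial_hadamard H ->
  \sum_(k < N) row_ratio H i j k * (row_ratio H i j k)^* = N%:R.
Proof.
move=> hH; rewrite (eq_bigr (fun _ => 1)) ?sumr_const ?card_ord //.
by move=> k _; rewrite unit_conj // ratio_norm.
Qed.

Lemma proj_submagic (M N : nat) (H : 'M[C]_(M, N)) :
  partial_hadamard H -> submagic_mx (fun i j => Proj (row_ratio H i j)).
Proof.
move=> hH; have [hn horth] := hH.
split.
- move=> i j; split.
    apply/matrixP => a b; rewrite !mxE ratio_sum //.
    by rewrite /row_ratio !(rmorphM, fmorphV, conjCK, conjC_nat) /= !conjCK conjC_nat; ring.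
  apply/matrixP => a b; rewrite Proj_mul !mxE !ratio_sum //.
  have N0 : N%:R != 0 :> C by rewrite pnatr_eq0 -lt0n (leq_ltn_trans _ (ltn_ord a)).
  rewrite (eq_bigr (fun _ => 1)); last first.
    by move=> k _; rewrite mulrC unit_conj // ratio_norm.
  rewrite sumr_const card_ord; field; exact: N0.
- move=> i j l jl; apply/matrixP => a b; rewrite Proj_mul !mxE.
  rewrite (eq_bigr (fun c => H j c * (H l c)^*)) ?horth ?mul0r // => c _.
  rewrite /row_ratio !unit_inv // rmorphM /= conjCK.
  transitivity ((H i c * (H i c)^*) * (H j c * (H l c)^*)); first ring.
  by rewrite unit_conj // mul1r.
- move=> i j l il; apply/matrixP => a b; rewrite Proj_mul !mxE.
  have li : l != i by rewrite eq_sym.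
  rewrite (eq_bigr (fun c => H l c * (H i c)^*)) ?horth ?mul0r // => c _.
  rewrite /row_ratio !unit_inv // rmorphM /= conjCK.
  transitivity ((H j c * (H j c)^*) * (H l c * (H i c)^*)); first ring.
  by rewrite unit_conj // mul1r.
Qed.

End Aux.

Theorem proposition2p1 (R : realType) (M N : nat) (H : 'M[R[i]]_(M, N))
    (A : lalgType R[i]) (star : A -> A) (u : 'I_M -> 'I_M -> A) :
  partial_hadamard H ->
  star_algebra star -> submagic star u -> submagic_universal star u ->
  exists! pi : A -> 'M[R[i]]_N,
    unital_star_rep star pi /\
    forall i j, pi (u i j) = Proj (row_ratio H i j).
Proof.
move=> hH _ _ hU.
have [pi [hpi huniq]] := hU N _ (@proj_submagic R M N H hH).
exists pi; split=> // pi' hpi'; symmetry; exact: huniq.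
Qed.
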